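(* Let $G=(V,E)$ be a finite graph with adjacency matrix $A$, and let $\eta:V\to\mathbb Z$ be a labeling. Let $\ell$ and $b$ be the numbers of level and bad vertices respectively. For $j\in\mathbb Z$ let $L_j$ be the set of level vertices with label $j$. If $\lambda$ is an eigenvalue of $A$ of multiplicity $m$, and $\ell_j$ denotes the multiplicity of $\lambda$ as an eigenvalue of the adjacency matrix of the subgraph induced by $L_j$ (with $\ell_j=0$ if it is not an eigenvalue), then $$m\le b+\sum_j\ell_j.$$ Consequently, for the multiplicities $m_1,\dots,m_k$ of any $k$ distinct eigenvalues of $A$, $m_1+\dots+m_k\le kb+\ell$.
   Context: Given a graph $G=(V,E)$ and a labeling $\eta:V\to\mathbb Z$, a vertex $v$ is called: (i) prodigy if it has a neighbour $w$ with $\eta(w)<\eta(v)$ such that all other neighbours of $w$ (other than $v$) have label less than $\eta(v)$; (ii) level if it is not prodigy and all of its neighbours have label $\le\eta(v)$; (iii) bad if it is neither prodigy nor level. *)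

(* Defs.v *)
From HB Require Import structures.
From mathcomp Require Import all_boot all_order all_algebra.
Set Implicit Arguments. Unset Strict Implicit. Unset Printing Implicit Defensive.
Import Order.TTheory GRing.Theory Num.Theory.

(* A finite simple graph on vertex set 'I_n : a symmetric irreflexive
   relation e; a labeling eta : 'I_n -> int. *)
Section Graph.
Variables (n : nat) (e : rel 'I_n) (eta : 'I_n -> int).

Local Open Scope ring_scope.

Definition prodigy (v : 'I_n) : bool :=
  [exists w, [&& e v w, eta w < eta v &
     [forall u, (e w u && (u != v)) ==> (eta u < eta v)]]].

Definition level (v : 'I_n) : bool :=
  ~~ prodigy v && [forall w, e v w ==> (eta w <= eta v)].

Definition bad (v : 'I_n) : bool := ~~ prodigy v && ~~ level v.

Definition Lset (j : int) : {set 'I_n} := [set v | level v & eta v == j].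

Definition adjmx (R : nzRingType) : 'M[R]_n := \matrix_(i, k) (e i k)%:R.

Definition induced_adjmx (R : nzRingType) (S : {set 'I_n}) : 'M[R]_#|S| :=
  \matrix_(i, k) (e (enum_val i) (enum_val k))%:R.

End Graph.

(* multiplicity of a as an eigenvalue of the square matrix M
   (dimension of the eigenspace; 0 if a is not an eigenvalue) *)
Definition eigmult (F : fieldType) (m : nat) (M : 'M[F]_m) (a : F) : nat :=
  \rank (eigenspace M a).

(* Main.v *)
Require Import Defs.
From mathcomp Require Import all_boot all_order all_algebra zify.
Import Order.TTheory GRing.Theory Num.Theory.
Set Implicit Arguments. Unset Strict Implicit.
Local Open Scope ring_scope.

Definition selmx (R : nzRingType) (n : nat) (S : {set 'I_n}) : 'M[R]_(n, #|S|) :=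
  \matrix_(i, k) (i == enum_val k)%:R.

Lemma sum_sel (R : nzRingType) n (u : 'rV[R]_n) x :
  \sum_i u 0 i * (i == x)%:R = u 0 x.
Proof.
rewrite (bigD1 x) //= eqxx mulr1 big1 ?addr0 // => i /negbTE->; by rewrite mulr0.
Qed.

Lemma selmxE (R : nzRingType) n (S : {set 'I_n}) (u : 'rV[R]_n) k :
  (u *m selmx R S) 0 k = u 0 (enum_val k).
Proof. rewrite !mxE; under eq_bigr do rewrite mxE; exact: sum_sel. Qed.

Lemma sel_zero (R : nzRingType) n (S : {set 'I_n}) (u : 'rV[R]_n) v :
  u *m selmx R S = 0 -> v \in S -> u 0 v = 0.
Proof.
move=> H vS; rewrite -(enum_rankK_in vS vS) -selmxE H mxE //.
Qed.

Lemma adjE (R : nzRingType) n e (u : 'rV[R]_n) v :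
  (u *m adjmx e R) 0 v = \sum_i u 0 i * (e i v)%:R.
Proof. rewrite !mxE; by under eq_bigr do rewrite mxE. Qed.

Lemma prodigy_zero (R : realFieldType) n (e : rel 'I_n) (e_sym : symmetric e)
  eta (lam : R) (c : int) (u : 'rV[R]_n) :
  u *m adjmx e R = lam *: u -> (forall v, eta v < c -> u 0 v = 0) ->
  forall v, prodigy e eta v -> eta v = c -> u 0 v = 0.
Proof.
move=> Hu Hz v /existsP[w /and3P[evw ltw /forallP Hw]] ev.
have := congr1 (fun M : 'rV[R]_n => M 0 w) Hu.
rewrite adjE mxE (Hz w) ?ev -?ev // mulr0 (bigD1 v) //= evw mulr1.
rewrite big1 ?addr0 // => i niv.
case eiw: (e i w); last by rewrite mulr0.
have := Hw i; rewrite e_sym eiw niv /= => lt.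
by rewrite Hz ?mul0r // -ev.
Qed.

Lemma nonlevel_zero (R : realFieldType) n (e : rel 'I_n) (e_sym : symmetric e)
  eta (lam : R) (c : int) (u : 'rV[R]_n) :
  u *m adjmx e R = lam *: u -> (forall v, eta v < c -> u 0 v = 0) ->
  (forall v, bad e eta v -> u 0 v = 0) ->
  forall v, ~~ level e eta v -> eta v = c -> u 0 v = 0.
Proof.
move=> Hu Hz Hb v nl ev.
case pv: (prodigy e eta v); first exact: (prodigy_zero e_sym Hu Hz pv ev).
by apply: Hb; rewrite /bad pv nl.
Qed.

Definition Hyp (R : realFieldType) n (e : rel 'I_n) eta (lam : R) (c : int)
  m (S : 'M[R]_(m, n)) :=
  forall u : 'rV[R]_n, (u <= S)%MS ->
   [/\ u *m adjmx e R = lam *: u, forall v, bad e eta v -> u 0 v = 0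
     & forall v, eta v < c -> u 0 v = 0].

Lemma eig_induced (R : realFieldType) n (e : rel 'I_n) (e_sym : symmetric e)
  eta (lam : R) (c : int) (u : 'rV[R]_n) :
  u *m adjmx e R = lam *: u -> (forall v, eta v < c -> u 0 v = 0) ->
  (forall v, bad e eta v -> u 0 v = 0) ->
  (u *m selmx R (Lset e eta c) <= eigenspace (induced_adjmx e R (Lset e eta c)) lam)%MS.
Proof.
move=> Hu Hz Hb; apply/eigenspaceP/rowP => k.
have vL := enum_valP k; set v := enum_val k in vL *.
rewrite [LHS]mxE [RHS]mxE selmxE.
under eq_bigr do rewrite selmxE mxE.
rewrite -(big_enum_val (fun x => u 0 x * (e x v)%:R)) /=.
have := congr1 (fun M : 'rV[R]_n => M 0 v) Hu; rewrite adjE mxE => <-.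
rewrite [RHS](bigID (fun i => i \in Lset e eta c)) /= [X in _ = _ + X]big1 ?addr0 //.
move=> i niL; case eiv: (e i v); last by rewrite mulr0.
move: vL; rewrite inE => /andP[lv /eqP ev].
have : eta i <= eta v.
  by move: lv => /andP[_ /forallP/(_ i)]; rewrite e_sym eiv.
rewrite le_eqVlt => /orP[/eqP ei|lt]; last by rewrite Hz ?mul0r // -ev.
rewrite (nonlevel_zero e_sym Hu Hz Hb) ?mul0r //; last by rewrite ei.
by apply: contra niL => li; rewrite inE li ei ev eqxx.
Qed.

Lemma main_ind (R : realFieldType) n (e : rel 'I_n) (e_sym : symmetric e)
  eta (lam : R) (labels : seq int) (Hl : uniq labels)
  (Hl2 : forall v, level e eta v -> eta v \in labels) (k : nat) :
  forall c : int, (forall v, eta v < c + k%:Z) ->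
  forall m (S : 'M[R]_(m, n)), Hyp e eta lam c S ->
  (\rank S <= \sum_(j <- labels | (c <= j)%R)
                eigmult (induced_adjmx e R (Lset e eta j)) lam)%N.
Proof.
elim: k => [|k IH] c Hc m S HS.
  suff /mxrankS : (S <= (0 : 'M[R]_n))%MS by rewrite mxrank0 leqn0 => /eqP->.
  apply/row_subP => i; have [_ _ Hz] := HS _ (row_sub i S).
  by rewrite submx0; apply/eqP/rowP => v; rewrite [RHS]mxE Hz //; have := Hc v; rewrite addr0.
set P := selmx R (Lset e eta c).
rewrite -(mxrank_mul_ker S P).
rewrite (bigID (fun j => j == c)) /=.
apply: leq_add.
  have HSP : (S *m P <= eigenspace (induced_adjmx e R (Lset e eta c)) lam)%MS.
    apply/row_subP => i; rewrite row_mul.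
    have [Hu Hb Hz] := HS _ (row_sub i S).
    exact: eig_induced.
  case cl: (c \in labels).
    rewrite (eq_bigl (pred1 c)); last by move=> j /=; case: eqP => [->|]; rewrite ?lexx ?andbF.
    rewrite -big_filter filter_pred1_uniq // big_seq1.
    exact: mxrankS.
  have Hc0 : #|Lset e eta c| = 0%N.
    apply/eqP; rewrite cards_eq0; apply/eqP/setP => v; rewrite !inE.
    apply/negbTE; apply/negP => /andP[lv /eqP ev].
    by move: (Hl2 v lv); rewrite ev cl.
  by rewrite (leq_trans (rank_leq_col _)) // Hc0.
rewrite (eq_bigl (fun j => (c + 1 <= j)%R)); last first.
  by move=> j /=; rewrite eq_sym; case: ltgtP => //=; lia.
apply: IH; first by move=> v; have := Hc v; lia.
move=> u /[dup] Hu1.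
rewrite sub_capmx => /andP[uS /sub_kermxP uP].
have [Hu Hb Hz] := HS _ uS; split => // v.
rewrite ltzD1 le_eqVlt => /orP[/eqP ev|]; last exact: Hz.
case lv: (level e eta v); last by rewrite (nonlevel_zero e_sym Hu Hz Hb) ?lv.
apply: (sel_zero uP); by rewrite inE lv ev eqxx.
Qed.

Lemma sum_eig_le (F : fieldType) m (M : 'M[F]_m) (s : seq F) :
  uniq s -> (\sum_(x <- s) eigmult M x <= m)%N.
Proof.
move=> us; rewrite (big_nth 0) big_mkord.
have inj : {in predT &, injective (fun i : 'I_(size s) => s`_i)}.
  move=> i j _ _ /eqP; rewrite nth_uniq // => /eqP; exact: val_inj.
have /mxdirectP := mxdirect_sum_eigenspace M inj.
rewrite /= => <-; exact: rank_leq_col.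
Qed.

Lemma sum_const_seq (T : Type) (s : seq T) (b : nat) :
  (\sum_(x <- s) b = size s * b)%N.
Proof. elim: s => [|x s IH]; by rewrite ?big_nil ?big_cons ?IH //= mulSn. Qed.
Local Close Scope ring_scope.
Unset Implicit Arguments.

Theorem theorem2p1 (R : realFieldType) (n : nat) (e : rel 'I_n)
    (e_sym : symmetric e) (e_irr : irreflexive e) (eta : 'I_n -> int) :
  let A := @adjmx n e R in
  let b := #|[set v | bad e eta v]| in
  let l := #|[set v | level e eta v]| in
  let labels := undup [seq eta v | v <- enum [set v | level e eta v]] in
  (forall lam : R,
     (eigmult A lam <= b + \sum_(j <- labels)
                             eigmult (@induced_adjmx n e R (Lset e eta j)) lam)%N)
  /\
  (forall s : seq R, uniq s -> all (eigenvalue A) s ->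
     (\sum_(lam <- s) eigmult A lam <= size s * b + l)%N).
Proof.
move=> A b l labels.
have Hl : uniq labels by exact: undup_uniq.
have Hl2 : forall v, level e eta v -> eta v \in labels.
  by move=> v lv; rewrite mem_undup map_f // mem_enum inE.
have part1 : forall lam : R,
     (eigmult A lam <= b + \sum_(j <- labels)
                             eigmult (@induced_adjmx n e R (Lset e eta j)) lam)%N.
  move=> lam; rewrite /eigmult.
  set E := eigenspace A lam.
  set Pb := selmx R [set v | bad e eta v].
  rewrite -(mxrank_mul_ker E Pb).
  apply: leq_add; first exact: rank_leq_col.
  set N := (\sum_v `|eta v|)%N.
  have HN : forall v, (`|eta v| <= N)%N.
    by move=> v; rewrite /N (bigD1 v) //= leq_addr.
  have := @main_ind R n e e_sym eta lam labels Hl Hl2 (2*N).+1 (- N%:Z) _ _ (E :&: kermx Pb)%MS.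
  have Hall : all (fun j => (- N%:Z <= j)%R) labels.
    apply/allP => j; rewrite mem_undup => /mapP[v _ ->]; have := HN v; lia.
  rewrite -big_filter (all_filterP Hall); apply.
    by move=> v; have := HN v; lia.
  move=> u; rewrite sub_capmx => /andP[/eigenspaceP uE /sub_kermxP uP]; split => // v.
    by move=> bv; apply: (sel_zero uP); rewrite inE.
  by move=> lt; have := HN v; lia.
split => // s us _.
have H1 : (\sum_(lam <- s) eigmult A lam <= \sum_(lam <- s) (b + \sum_(j <- labels)
                             eigmult (@induced_adjmx n e R (Lset e eta j)) lam))%N.
  by apply: leq_sum => lam _; exact: part1.
apply: leq_trans H1 _.
rewrite big_split /= sum_const_seq leq_add2l exchange_big /=.
have H2 : (\sum_(j <- labels) \sum_(lam <- s) eigmult (@induced_adjmx n e R (Lset e eta j)) lam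
   <= \sum_(j <- labels) #|Lset e eta j|)%N.
  by apply: leq_sum => j _; exact: sum_eig_le.
apply: leq_trans H2 _.
rewrite /l -sum1_card.
under eq_bigr do rewrite -sum1_card big_mkcond /=.
rewrite exchange_big /= [X in (_ <= X)%N]big_mkcond /=.
apply: leq_sum => v _.
rewrite inE; case lv: (level e eta v); last first.
  by rewrite big1 // => j _; rewrite inE lv.
under eq_bigr do rewrite inE lv /=.
rewrite -big_mkcond sum1_count.
rewrite (@eq_count _ _ (pred1 (eta v))) ?count_uniq_mem ?leq_b1 //.
Qed.
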